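(* Let $G$ be a finite group and $\mathcal{P}$ a prime ideal of $\mathrm{Gh}(\underline{A}_G)$. For each $H\le G$ write $\mathcal{P}(G/H)=\widetilde{A}(H)\cap\prod_{I\le H}n_{I,H}\mathbb{Z}$ with integers $n_{I,H}\ge0$. Then for all $I\le H\le G$, $n_{I,H}=n_{I,G}$.
   Context: For $H\le G$, $\widetilde{A}(H)$ is the subring of $\prod_{I\le H}\mathbb{Z}$ of tuples $(a_I)_{I\le H}$ with $a_{hIh^{-1}}=a_I$ for $h\in H$; every ideal of $\widetilde{A}(H)$ is of the form $\widetilde{A}(H)\cap\prod_{I\le H}n_I\mathbb{Z}$ with unique $n_I\ge0$ constant on $H$-conjugacy classes. $\mathrm{Gh}(\underline{A}_G)$ is the $G$-Tambara functor with $\mathrm{Gh}(\underline{A}_G)(G/H)=\widetilde{A}(H)$ and, for $H\le K$, $g\in G$, $I^g=g^{-1}Ig$: $\mathrm{res}^K_H(b)_L=b_L$; $\mathrm{tr}^K_H(a)_I=\sum_{kH\in K/H,\ I^k\le H}a_{I^k}$; $\mathrm{nm}^K_H(a)_I=\prod_{IgH\in I\backslash K/H}a_{I^g\cap H}$; $c_{g,H}(a)_J=a_{J^g}$ for $J\le gHg^{-1}$. A Tambara ideal is a collection of ideals $\mathcal{I}(G/H)$ closed under all restrictions, transfers, norms and conjugations; it is prime (Nakaoka) if it is not everything and whenever $a\in T(G/K_1)$, $b\in T(G/K_2)$ satisfy $\big(\mathrm{nm}^L_{g_1H_1g_1^{-1}}c_{g_1,H_1}\mathrm{res}^{K_1}_{H_1}(a)\big)\big(\mathrm{nm}^L_{g_2H_2g_2^{-1}}c_{g_2,H_2}\mathrm{res}^{K_2}_{H_2}(b)\big)\in\mathcal{I}(G/L)$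 for all $L,H_1,H_2\le G$, $g_1,g_2\in G$ with $H_i\le K_i$, $g_iH_ig_i^{-1}\le L$, then $a\in\mathcal{I}(G/K_1)$ or $b\in\mathcal{I}(G/K_2)$. *)

(* Defs.v *)
From mathcomp Require Import all_boot all_order all_algebra all_fingroup.
Set Implicit Arguments. Unset Strict Implicit. Unset Printing Implicit Defensive.
Import GRing.Theory.
Local Open Scope ring_scope.

(* Elements of Gh(A_G)(G/H) = Ã(H) are represented as functions
   a : {group gT} -> int, with a I meaningful for I <= H and normalized to 0
   for I not a subgroup of H.  Conjugation I^g = g^-1 I g is mathcomp's I :^ g. *)

Section Ghost.
Variable gT : finGroupType.
Implicit Types (H I J K L : {group gT}) (a b : {group gT} -> int).

Definition Atil H a : Prop :=
  (forall I, ~~ (I \subset H) -> a I = 0) /\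
  (forall I (h : gT), I \subset H -> h \in H -> a (I :^ h)%G = a I).

Definition gh_add a b : {group gT} -> int := fun I => a I + b I.
Definition gh_opp a : {group gT} -> int := fun I => - a I.
Definition gh_mul a b : {group gT} -> int := fun I => a I * b I.
Definition gh_zero : {group gT} -> int := fun _ => 0.

Definition gh_res H b : {group gT} -> int :=
  fun L => if L \subset H then b L else 0.

Definition gh_tr K H a : {group gT} -> int :=
  fun I => if I \subset K then
    \sum_(C in lcosets H K)
       (let k := repr C in if (I :^ k \subset H)%g then a (I :^ k)%G else 0)
  else 0.

Definition dcosets I K H : {set {set gT}} :=
  [set ((I :* g) * H)%g | g in K].

Definition gh_nm K H a : {group gT} -> int :=
  fun I => if I \subset K then
    \prod_(D in dcosets I K H)
       (let g := repr D in a ((I :^ g) :&: H)%G)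
  else 0.

(* c_{g,H} : Ã(H) -> Ã(gHg^-1), c(a)_J = a_{J^g} for J <= gHg^-1 = H :^ g^-1 *)
Definition gh_conj (g : gT) H a : {group gT} -> int :=
  fun J => if (J \subset H :^ g^-1)%g then a (J :^ g)%G else 0.

Definition gh_ideal H (P : ({group gT} -> int) -> Prop) : Prop :=
  (forall a, P a -> Atil H a) /\ P gh_zero /\
  (forall a b, P a -> P b -> P (gh_add a (gh_opp b))) /\
  (forall r a, Atil H r -> P a -> P (gh_mul r a)).

Definition tambara_ideal (G : {group gT})
  (P : {group gT} -> ({group gT} -> int) -> Prop) : Prop :=
  (forall H, H \subset G -> gh_ideal H (P H)) /\
  (forall H K b, H \subset K -> K \subset G -> P K b -> P H (gh_res H b)) /\
  (forall H K a, H \subset K -> K \subset G -> P H a -> P K (gh_tr K H a)) /\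
  (forall H K a, H \subset K -> K \subset G -> P H a -> P K (gh_nm K H a)) /\
  (forall H (g : gT) a, H \subset G -> g \in G -> P H a ->
      P (H :^ g^-1)%G (gh_conj g H a)).

Definition prime_tambara_ideal (G : {group gT})
  (P : {group gT} -> ({group gT} -> int) -> Prop) : Prop :=
  tambara_ideal G P /\
  (exists H a, H \subset G /\ Atil H a /\ ~ P H a) /\
  (forall K1 K2 a b, K1 \subset G -> K2 \subset G -> Atil K1 a -> Atil K2 b ->
    (forall L H1 H2 (g1 g2 : gT), L \subset G -> H1 \subset K1 -> H2 \subset K2 ->
       g1 \in G -> g2 \in G -> (H1 :^ g1^-1 \subset L)%g -> (H2 :^ g2^-1 \subset L)%g ->
       P L (gh_mul (gh_nm L (H1 :^ g1^-1)%G (gh_conj g1 H1 (gh_res H1 a)))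
                   (gh_nm L (H2 :^ g2^-1)%G (gh_conj g2 H2 (gh_res H2 b))))) ->
    P K1 a \/ P K2 b).

End Ghost.

(* Main.v *)
Require Import Defs.
From mathcomp Require Import all_boot all_order all_algebra all_fingroup.
Set Implicit Arguments. Unset Strict Implicit. Unset Printing Implicit Defensive.
Import GRing.Theory.

Section Helpers.
Variable gT : finGroupType.
Implicit Types (H I J K L T : {group gT}) (a b x y z f : {group gT} -> int).

Lemma Atil_ext H f g : Atil H f -> (forall J, f J = g J) -> Atil H g.
Proof.
case=> h1 h2 e; split=> [J hJ|J h hJ hh]; rewrite -!e; [exact: h1| exact: h2].
Qed.

Lemma Atil_mul H a b : Atil H a -> Atil H b -> Atil H (gh_mul a b).
Proof.
case=> a1 a2 [b1 b2]; split=> [J hJ|J h hJ hh]; rewrite /gh_mul.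
  by rewrite a1 // GRing.mul0r.
by rewrite a2 // b2.
Qed.

Lemma Atil_map H a (phi : int -> int) : phi 0%R = 0%R -> Atil H a ->
  Atil H (fun J => phi (a J)).
Proof.
move=> p0 [a1 a2]; split=> [J hJ|J h hJ hh]; first by rewrite a1.
by rewrite a2.
Qed.

Lemma Atil_res H K x : H \subset K -> Atil K x -> Atil H (gh_res H x).
Proof.
move=> hHK [x1 x2]; split=> [J hJ|J h hJ hh]; rewrite /gh_res.
  by rewrite (negbTE hJ).
have hJh : (J :^ h)%G \subset H by rewrite /= sub_conjg conjGid ?groupV.
rewrite hJh hJ x2 //; first exact: subset_trans hJ hHK.
exact: (subsetP hHK).
Qed.

Lemma Atil_conj H (g : gT) z : Atil H z -> Atil (H :^ g^-1)%G (gh_conj g H z).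
Proof.
move=> [z1 z2]; split=> [J hJ|J h hJ hh]; rewrite /gh_conj.
  by rewrite (negbTE hJ).
have hJh : (J :^ h)%G \subset (H :^ g^-1)%G.
  by rewrite sub_conjg conjGid ?groupV.
rewrite hJh hJ.
have hJg : (J :^ g)%G \subset H by rewrite /= sub_conjg.
have hhg : (h ^ g)%g \in H by rewrite -mem_conjgV.
rewrite -(z2 _ _ hJg hhg); congr z; apply: group_inj => /=.
by rewrite -!conjsgM conjgC.
Qed.


Lemma dc_term J T y (x u : gT) : Atil T y -> u \in (J :* x * T)%g ->
  y ((J :^ u) :&: T)%G = y ((J :^ x) :&: T)%G.
Proof.
move=> [_ y2] /mulsgP[j' t /rcosetP[j hj ->] ht ->].
have -> : ((J :^ (j * x * t)) :&: T)%G = (((J :^ x) :&: T)%G :^ t)%G.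
  apply: group_inj => /=.
  by rewrite !conjsgM (conjGid hj) conjIg (conjGid ht).
by rewrite y2 // subsetIr.
Qed.

Lemma dc_mem J T (x : gT) : x \in (J :* x * T)%g.
Proof. by rewrite -{1}[x]mulg1 mem_mulg ?rcoset_refl. Qed.

Lemma dcosets_conj J L T (h : gT) : h \in L ->
  dcosets (J :^ h)%G L T = [set (h^-1 *: D)%g | D in dcosets J L T].
Proof.
move=> hh; rewrite /dcosets -imset_comp; apply/setP=> D.
apply/imsetP/imsetP=> [[g hg ->]|[g hg ->]].
  exists (h * g)%g; first by rewrite groupM.
  by rewrite /= conjsgE -!mulgA lcosetM.
exists (h^-1 * g)%g; first by rewrite groupM ?groupV.
by rewrite /= conjsgE -!mulgA -lcosetM mulKVg.
Qed.

Lemma Atil_nm L T y : T \subset L -> Atil T y -> Atil L (gh_nm L T y).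
Proof.
move=> hTL hy; split=> [J hJ|J h hJ hh]; rewrite /gh_nm.
  by rewrite (negbTE hJ).
have hJh : (J :^ h)%G \subset L by rewrite sub_conjg conjGid ?groupV.
rewrite hJh hJ dcosets_conj // big_imset /=; last first.
  by move=> D1 D2 _ _; apply: lcoset_inj.
apply: eq_bigr => D /imsetP[g hg ->].
rewrite (dc_term (x := g) hy (mem_repr _ (dc_mem J T g))).
rewrite -(dc_term (x := g) hy (u := (h * repr (h^-1 *: (J :* g * T)))%g)).
  by congr y; apply: group_inj => /=; rewrite conjsgM.
have hm : (h^-1 * g)%g \in (h^-1 *: (J :* g * T))%g.
  by rewrite mem_lcoset invgK mulKVg dc_mem.
by have := mem_repr _ hm; rewrite mem_lcoset invgK.
Qed.


Lemma dvd_sq_mul (d a b : int) : (d %| (a * a)%R)%Z -> (d %| (b * b)%R)%Z -> (d %| (a * b)%R)%Z.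
Proof.
rewrite !dvdzE !abszM => h1 h2.
rewrite -(dvdn_pexp2r _ _ (isT : 0 < 2)) expnMn.
exact: dvdn_mul.
Qed.

Lemma nm_mulp K T f y z : (forall X, f X = (y X * z X)%R) ->
  forall J, gh_nm K T f J = (gh_nm K T y J * gh_nm K T z J)%R.
Proof.
move=> e J; rewrite /gh_nm; case: ifP => _; last by rewrite GRing.mulr0.
by rewrite -big_split; apply: eq_bigr => D _; rewrite e.
Qed.

Lemma conj_mulp (g : gT) T f y z : (forall X, f X = (y X * z X)%R) ->
  forall J, gh_conj g T f J = (gh_conj g T y J * gh_conj g T z J)%R.
Proof.
by move=> e J; rewrite /gh_conj; case: ifP => _; rewrite ?e ?GRing.mulr0.
Qed.

Lemma res_mulp T f y z : (forall X, f X = (y X * z X)%R) ->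
  forall J, gh_res T f J = (gh_res T y J * gh_res T z J)%R.
Proof.
by move=> e J; rewrite /gh_res; case: ifP => _; rewrite ?e ?GRing.mulr0.
Qed.

End Helpers.

Definition charP (gT : finGroupType) (G : {group gT})
  (P : {group gT} -> ({group gT} -> int) -> Prop)
  (n : {group gT} -> {group gT} -> nat) :=
  forall H : {group gT}, H \subset G ->
     (forall (I : {group gT}) (h : gT), I \subset H -> h \in H ->
        n (I :^ h)%G H = n I H) /\
     (forall a, P H a <->
        (Atil H a /\ forall I : {group gT}, I \subset H -> ((n I H)%:Z %| a I)%Z)).

Lemma P_ext (gT : finGroupType) (G : {group gT}) P n (hn : charP G P n)
  (H : {group gT}) f g : H \subset G -> (forall J, f J = g J) -> P H f -> P H g.
Proof.
move=> hH e /(proj2 (hn H hH) f) [hA hd]; apply/(proj2 (hn H hH) g); split.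
  exact: Atil_ext hA e.
by move=> I hI; rewrite -e hd.
Qed.

Lemma radical (gT : finGroupType) (G : {group gT}) P n
  (hP : prime_tambara_ideal G P) (hn : charP G P n) (K : {group gT}) x :
  K \subset G -> Atil K x -> P K (gh_mul x x) -> P K x.
Proof.
move=> hK hx hxx.
case: hP => [[hid [hres [htr [hnm hconj]]]] [_ hprime]].
suff: P K x \/ P K x by case.
apply: (hprime K K x x hK hK hx hx) => L H1 H2 g1 g2 hL h1 h2 hg1 hg2 s1 s2.
have key : forall (H1 : {group gT}) (g1 : gT), H1 \subset K -> g1 \in G ->
    (H1 :^ g1^-1)%G \subset L -> forall J : {group gT}, J \subset L ->
    ((n J L)%:Z %| (gh_nm L (H1 :^ g1^-1)%G (gh_conj g1 H1 (gh_res H1 x)) J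
       * gh_nm L (H1 :^ g1^-1)%G (gh_conj g1 H1 (gh_res H1 x)) J)%R)%Z.
  move=> H g hHK hg hs J hJ.
  have hHG : H \subset G := subset_trans hHK hK.
  have := hnm _ _ _ hs hL (hconj _ _ _ hHG hg (hres _ _ _ hHK hK hxx)).
  move/(proj2 (hn L hL))=> [_ /(_ J hJ)].
  have e : forall X, gh_mul x x X = (x X * x X)%R by [].
  by rewrite (nm_mulp L (H :^ g^-1)%G (conj_mulp g H (res_mulp H e))).
have hA : forall (H1 : {group gT}) (g1 : gT), H1 \subset K ->
    (H1 :^ g1^-1)%G \subset L -> Atil L (gh_nm L (H1 :^ g1^-1)%G (gh_conj g1 H1 (gh_res H1 x))).
  by move=> H g hHK hs; apply: Atil_nm hs (Atil_conj _ (Atil_res hHK hx)).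
apply/(proj2 (hn L hL)); split; first exact: Atil_mul (hA _ _ h1 s1) (hA _ _ h2 s2).
move=> J hJ; rewrite /gh_mul; apply: dvd_sq_mul; exact: key.
Qed.

Lemma rad_pow (gT : finGroupType) (G : {group gT}) P n
  (hP : prime_tambara_ideal G P) (hn : charP G P n) (K : {group gT}) t :
  forall x, K \subset G -> Atil K x -> P K (fun J => x J ^+ (2 ^ t))%R -> P K x.
Proof.
elim: t => [|t IH] x hK hx hp.
  by apply: (P_ext hn hK _ hp) => J; rewrite GRing.expr1.
apply: (IH _ hK hx).
have h0 : (0 ^+ (2 ^ t) = 0 :> int)%R by rewrite GRing.expr0n expn_eq0.
apply: (radical hP hn hK (Atil_map (phi := fun v : int => (v ^+ (2 ^ t))%R) h0 hx)).
apply: (P_ext hn hK _ hp) => J.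
by rewrite /gh_mul expnS mul2n -addnn GRing.exprD.
Qed.

Lemma nII (gT : finGroupType) (G : {group gT}) P n
  (hP : prime_tambara_ideal G P) (hn : charP G P n) (I H : {group gT}) :
  I \subset H -> H \subset G -> n I H = n I I.
Proof.
move=> hIH hHG; have hIG := subset_trans hIH hHG.
case: (hP) => [[hid [hres [htr [hnm hconj]]]] _].
apply/eqP; rewrite eqn_dvd; apply/andP; split; last first.
  pose w := fun J : {group gT} => if J \subset H then (Posz (n J H)) else 0%R.
  have hw : P H w.
    apply/(proj2 (hn H hHG)); split.
      split=> [J hJ|J h hJ hh]; rewrite /w ?(negbTE hJ) //.
      have hJh : (J :^ h)%G \subset H by rewrite sub_conjg conjGid ?groupV.
      by rewrite hJh hJ (proj1 (hn H hHG)).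
    by move=> J hJ; rewrite /w hJ dvdzz.
  have := hres _ _ _ hIH hHG hw.
  move/(proj2 (hn I hIG)) => [_ /(_ I (subxx _))].
  by rewrite /gh_res subxx /w hIH dvdzE.
set m := n I I.
pose N := 'N_H(I)%G.
have hIN : I \subset N by rewrite subsetI hIH normG.
have hNH : N \subset H by exact: subsetIl.
have hNG := subset_trans hNH hHG.
have inN : forall h, h \in N -> h \in 'N(I)%g by move=> h; rewrite inE => /andP[].
have eqI : forall (J : {group gT}) h, h \in 'N(I)%g -> ((J :^ h)%G == I) = (J == I).
  move=> J h hh; apply/eqP/eqP => [E|->].
    apply: group_inj; have /= E' := congr1 (@gval gT) E.
    rewrite -[gval J](conjsgK h) E'; apply/normP; by rewrite groupV.
  by apply: group_inj; rewrite /= (normP hh).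
pose x := fun J : {group gT} => if J == I then Posz m else 0%R.
have hxA : Atil I x.
  split=> [J hJ|J h hJ hh]; rewrite /x.
    by case: eqP => // E; move: hJ; rewrite E subxx.
  by rewrite eqI // (subsetP (normG I)).
have hx : P I x.
  apply/(proj2 (hn I hIG)); split => // J hJ; rewrite /x.
  by case: eqP => [->|_]; [exact: dvdzz|exact: dvdz0].
have hz1 := hnm _ _ _ hIN hNG hx.
have z1I : gh_nm N I x I = (Posz m ^+ #|dcosets I N I|)%R.
  rewrite /gh_nm hIN -prodr_const; apply: eq_bigr => D /imsetP[g hg ->].
  rewrite /x.
  have hr : repr (I :* g * I)%g \in 'N(I)%g.
    have := mem_repr _ (dc_mem I I g).
    move/mulsgP=> [j' t /rcosetP[j hj ->] ht ->].
    have nI := subsetP (normG I).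
    by rewrite !groupM ?(inN g hg) ?nI.
  case: eqP => // E; exfalso; apply: E.
  by apply: group_inj; rewrite /= (normP hr) setIid.
pose e := fun J : {group gT} => (if J == I then 1%R else 0%R) : int.
have heA : Atil N e.
  split=> [J hJ|J h hJ hh]; rewrite /e.
    by case: eqP => // E; move: hJ; rewrite E hIN.
  by rewrite eqI // inN.
have hz2 := (hid N hNG).2.2.2 e _ heA hz1.
have hz3 := htr _ _ _ hNH hHG hz2.
have z3I : gh_tr H N (gh_mul e (gh_nm N I x)) I = (Posz m ^+ #|dcosets I N I|)%R.
  rewrite /gh_tr hIH (bigD1 (gval N)) /=; last first.
    rewrite -{1}(lcoset_id (group1 N)) mem_lcosets.
    by rewrite -[1%g]mulg1 mem_mulg.
  rewrite repr_group conjsg1 hIN.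
  have -> : (I :^ 1)%G = I by apply: group_inj; rewrite /= conjsg1.
  rewrite /gh_mul {1}/e eqxx GRing.mul1r z1I big1 ?GRing.addr0 // => C /andP[hC hCN].
  case: ifP => // hs; rewrite /e; case: eqP => [E|]; last by rewrite GRing.mul0r.
  exfalso; move: hC hCN E => /imsetP[y hy ->] hCN E.
  have hr : repr (lcoset N y) \in (y *: N)%g.
    by rewrite -lcosetE; apply: (mem_repr y); rewrite lcosetE lcoset_refl.
  have hrN : repr (lcoset N y) \in N.
    rewrite inE; apply/andP; split.
      by move: hr => /lcosetP[u hu ->]; rewrite groupM // (subsetP hNH).
    by apply/normP; exact: (congr1 (@gval gT) E).
  move: hCN; rewrite lcosetE -(lcoset_eqP hr) (lcoset_id hrN) eqxx.
  by [].
have hdr : ((Posz (n I H)) %| (Posz m ^+ #|dcosets I N I|)%R)%Z.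
  by have := proj2 (proj1 (proj2 (hn H hHG) _) hz3) I hIH; rewrite z3I.
set r := #|dcosets I N I| in hdr.
have hdiv : ((Posz (n I H)) %| (Posz m ^+ (2 ^ r))%R)%Z.
  rewrite -(subnKC (ltnW (ltn_expl r (isT : 1 < 2)))) GRing.exprD.
  exact: dvdz_mulr.
pose a := fun J : {group gT} => if J \subset H then
   (if ((Posz (n J H)) %| (Posz m ^+ (2 ^ r))%R)%Z then Posz m else 0%R) else 0%R.
have haA : Atil H a.
  split=> [J hJ|J h hJ hh]; rewrite /a ?(negbTE hJ) //.
  have hJh : (J :^ h)%G \subset H by rewrite sub_conjg conjGid ?groupV.
  by rewrite hJh hJ (proj1 (hn H hHG)).
have h0 : (0 ^+ (2 ^ r) = 0 :> int)%R by rewrite GRing.expr0n expn_eq0.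
have hpa : P H (fun J => a J ^+ (2 ^ r))%R.
  apply/(proj2 (hn H hHG)); split.
    exact: (Atil_map (phi := fun v : int => (v ^+ (2 ^ r))%R) h0 haA).
  move=> J hJ; rewrite /a hJ; case: ifP => // _.
  by rewrite h0 dvdz0.
have := rad_pow hP hn hHG haA hpa.
move/(proj2 (hn H hHG)) => [_ /(_ I hIH)].
by rewrite /a hIH hdiv dvdzE.
Qed.

Theorem proposition4p5 (gT : finGroupType) (G : {group gT})
  (P : {group gT} -> ({group gT} -> int) -> Prop)
  (n : {group gT} -> {group gT} -> nat) :
  prime_tambara_ideal G P ->
  (forall H : {group gT}, H \subset G ->
     (forall (I : {group gT}) (h : gT), I \subset H -> h \in H ->
        n (I :^ h)%G H = n I H) /\
     (forall a, P H a <->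
        (Atil H a /\ forall I : {group gT}, I \subset H -> ((n I H)%:Z %| a I)%Z))) ->
  forall I H : {group gT}, I \subset H -> H \subset G -> n I H = n I G.
Proof.
move=> hP hn I H hIH hHG.
by rewrite (nII hP hn hIH hHG) (nII hP hn (subset_trans hIH hHG) (subxx G)).
Qed.
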